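(* A graph $3$-partition $\mathscr{G}=(G_{<},G_{=},G_{>},\sigma)$ with vertex set $L$ can be explained by a relaxed scenario if and only if, for every subset $L'\subseteq L$, the restriction $\mathscr{G}_{|L'}=(G_{<}[L'],G_{=}[L'],G_{>}[L'],\sigma_{|L'})$ can be explained by a relaxed scenario.
   Context: All trees are planted phylogenetic trees: a tree $T$ has a distinguished vertex $0_T$ of degree $1$ whose unique neighbor $\rho_T$ is the root, and every vertex other than $0_T$ and the leaves $L(T)$ has at least two children. For $x,y\in V(T)$ write $y\preceq_T x$ if $x$ lies on the path from $0_T$ to $y$; edges are written $uv$ with $v\prec_T u$. $\mathrm{lca}_T$ denotes the last common ancestor. A time map for $T$ is $\tau_T\colon V(T)\to\mathbb{R}$ with $\tau_T(x)<\tau_T(y)$ whenever $x\prec_T y$. A relaxed scenario $\mathscr{S}=(T,S,\sigma,\mu,\tau_T,\tau_S)$ consists of a gene tree $T$ with time map $\tau_T$, a species tree $S$ with time map $\tau_S$, a map $\sigma\colon L(T)\to M$ with $M\subseteq L(S)$, and a map $\mu\colon V(T)\to V(S)\cup E(S)$ such that (S0) $\mu(x)=0_S$ iff $x=0_T$; (S1) $\mu(x)\in L(S)$ iff $x\in L(T)$, in which case $\mu(x)=\sigma(x)$; (S2) if $\mu(x)\in V(S)$ then $\tau_S(\mu(x))=\tau_T(x)$; (S3) if $\mu(x)=uv\in E(S)$ then $\tau_S(v)<\tau_T(x)<\tau_S(u)$. The graphs $G_{=}(\mathscr{S})$, $G_{<}(\mathscr{S})$, $G_{>}(\mathscr{S})$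 have vertex set $L(T)$, and for distinct $x,y$ the pair $xy$ is an edge of $G_{=}(\mathscr{S})$, $G_{<}(\mathscr{S})$, resp. $G_{>}(\mathscr{S})$ iff $\tau_T(\mathrm{lca}_T(x,y))$ is $=$, $<$, resp. $>$ than $\tau_S(\mathrm{lca}_S(\sigma(x),\sigma(y)))$. A graph $3$-partition $\mathscr{G}=(G_{<},G_{=},G_{>},\sigma)$ is an ordered tuple of three edge-disjoint graphs on a common vertex set $L$ with coloring $\sigma\colon L\to M$ such that every unordered pair of distinct elements of $L$ is an edge of exactly one of them; it is explained by $\mathscr{S}$ (with the same $\sigma$) if $G_{<}=G_{<}(\mathscr{S})$, $G_{=}=G_{=}(\mathscr{S})$, $G_{>}=G_{>}(\mathscr{S})$. $G[L']$ denotes the induced subgraph. *)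

(* Defs.v *)
From Stdlib Require Import Reals.
From mathcomp Require Import all_boot.
Set Implicit Arguments. Unset Strict Implicit. Unset Printing Implicit Defensive.

Definition simple_graph (L : finType) (G : rel L) : Prop :=
  (forall x, ~~ G x x) /\ (forall x y, G x y = G y x).

Definition is_g3partition (L : finType) (Glt Geq Ggt : rel L) : Prop :=
  simple_graph Glt /\ simple_graph Geq /\ simple_graph Ggt /\
  forall x y, x != y -> (Glt x y + Geq x y + Ggt x y == 1)%N.

(* A tree is given by its finite vertex type, a parent map and the planted
   vertex 0_T (the unique fixpoint of the parent map). The edges are the
   pairs (par v, v) for v <> 0_T. *)
Record ptree := PTree { vtx : finType; par : vtx -> vtx; zero : vtx }.

Definition children (T : ptree) (v : vtx T) : {set vtx T} :=
  [set w | (par w == v) && (w != zero T)].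

Definition is_leaf (T : ptree) (v : vtx T) : bool :=
  (v != zero T) && (children v == set0).

Definition planted (T : ptree) : Prop :=
  par (zero T) = zero T /\
  (forall v : vtx T, exists k, iter k (@par T) v = zero T) /\
  #|children (zero T)| = 1 /\
  (forall v : vtx T, v != zero T -> ~~ is_leaf v -> 1 < #|children v|).

(* ancb x y  <=>  y lies on the path from 0_T to x, i.e. x <=_T y *)
Definition ancb (T : ptree) (x y : vtx T) : bool :=
  [exists k : 'I_#|vtx T|.+1, iter k (@par T) x == y].

Definition lca (T : ptree) (x y : vtx T) : vtx T :=
  odflt (zero T) [pick z | [&& ancb x z, ancb y z &
                            [forall w, (ancb x w && ancb y w) ==> ancb z w]]].

Definition time_map (T : ptree) (tau : vtx T -> R) : Prop :=
  forall x y : vtx T, ancb x y -> x != y -> Rlt (tau x) (tau y).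

(* Gene tree leaves are identified with L via lfT (a bijection onto L(T));
   colours M are identified with a subset of L(S) via the injection lfS.
   mu x = inl v : x is mapped to the vertex v of S;
   mu x = inr v : x is mapped to the edge (par v, v) of S (v <> 0_S). *)
Definition relaxed_scenario (L M : finType) (sigma : L -> M)
  (T S : ptree) (lfT : L -> vtx T) (lfS : M -> vtx S)
  (mu : vtx T -> (vtx S + vtx S)%type) (tauT : vtx T -> R) (tauS : vtx S -> R)
  : Prop :=
  planted T /\ planted S /\ time_map tauT /\ time_map tauS /\
  injective lfT /\ (forall v, is_leaf v <-> exists l, lfT l = v) /\
  injective lfS /\ (forall m, is_leaf (lfS m)) /\
  (forall x v, mu x = inr v -> v != zero S) /\
  (forall x, mu x = inl (zero S) <-> x = zero T) /\
  (forall x, (exists v, mu x = inl v /\ is_leaf v) <-> is_leaf x) /\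
  (forall l, mu (lfT l) = inl (lfS (sigma l))) /\
  (forall x v, mu x = inl v -> tauT x = tauS v) /\
  (forall x v, mu x = inr v -> Rlt (tauS v) (tauT x) /\ Rlt (tauT x) (tauS (par v))).

Definition explainable (L M : finType) (Glt Geq Ggt : rel L) (sigma : L -> M)
  : Prop :=
  exists (T S : ptree) (lfT : L -> vtx T) (lfS : M -> vtx S)
         (mu : vtx T -> (vtx S + vtx S)%type) (tauT : vtx T -> R)
         (tauS : vtx S -> R),
    relaxed_scenario sigma lfT lfS mu tauT tauS /\
    forall l l' : L,
      let a := tauT (lca (lfT l) (lfT l')) in
      let b := tauS (lca (lfS (sigma l)) (lfS (sigma l'))) in
      (Glt l l' <-> l <> l' /\ Rlt a b) /\
      (Geq l l' <-> l <> l' /\ a = b) /\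
      (Ggt l l' <-> l <> l' /\ Rgt a b).

Definition restr (L : finType) (L' : {set L}) (G : rel L)
  : rel {x : L | x \in L'} := fun x y => G (val x) (val y).

Definition restr_col (L M : finType) (L' : {set L}) (sigma : L -> M)
  : {x : L | x \in L'} -> M := fun x => sigma (val x).

Arguments restr {L} L' G.
Arguments restr_col {L M} L' sigma.

(* Main.v *)
Require Import Defs.
From Stdlib Require Import Reals.
From mathcomp Require Import all_boot.
From mathcomp Require Import zify.
Set Implicit Arguments. Unset Strict Implicit. Unset Printing Implicit Defensive.

Definition anc (T : ptree) (x y : vtx T) := exists k, iter k (@par T) x = y.

Section TreeLemmas.
Variable T : ptree.
Hypothesis HT : planted T.
Notation V := (vtx T).
Notation p := (@par T).
Notation z0 := (zero T).

Lemma par_zero : p z0 = z0. Proof. by case: HT. Qed.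

Lemma iter_zero k : iter k p z0 = z0.
Proof. by elim: k => //= k ->; rewrite par_zero. Qed.

Lemma reach (v : V) : exists k, iter k p v = z0.
Proof. by case: HT => _ [H _]. Qed.

Lemma anc_refl (x : V) : anc x x. Proof. by exists 0. Qed.
Lemma anc_par (x : V) : anc x (p x). Proof. by exists 1. Qed.
Lemma anc_trans (x y w : V) : anc x y -> anc y w -> anc x w.
Proof. by move=> [a <-] [b <-]; exists (b + a); rewrite iterD. Qed.
Lemma anc_zero (x : V) : anc x z0. Proof. exact: reach. Qed.

Lemma iter_card (x : V) : iter #|V| p x = z0.
Proof.
have ex : exists k, iter k p x == z0 by case: (reach x) => k Hk; exists k; apply/eqP.
case: (ex_minnP ex) => k /eqP Hk Hmin.
suff Hle : k <= #|V| by rewrite -(subnK Hle) iterD Hk iter_zero.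
pose f := fun i : 'I_k => iter i p x.
have finj : injective f.
  move=> i j; rewrite /f => Hij; apply/val_inj => /=.
  wlog lt : i j Hij / i < j.
    move=> W; case: (ltngtP i j) => h; first exact: W.
    - by symmetry; apply: W.
    - done.
  exfalso.
  have : k <= k - j + i by apply: Hmin; apply/eqP; rewrite iterD Hij -iterD subnK ?Hk // ltnW.
  have := ltn_ord j; lia.
by have := leq_card f finj; rewrite card_ord.
Qed.

Lemma ancbP (x y : V) : reflect (anc x y) (ancb x y).
Proof.
apply: (iffP existsP) => [[k /eqP Hk]|[k Hk]]; first by exists k.
case: (leqP k #|V|) => h.
  by exists (Ordinal (n:=#|V|.+1) h); apply/eqP.
exists (Ordinal (n:=#|V|.+1) (ltnSn _)); apply/eqP => /=.
by rewrite -Hk -(subnK (ltnW h)) iterD iter_card iter_zero.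
Qed.

Lemma par_fix (v : V) : p v = v -> v = z0.
Proof.
move=> H; case: (reach v) => k; suff -> : iter k p v = v by [].
by elim: k => //= k ->.
Qed.

Lemma iter_mul_fix k n (x : V) : iter k p x = x -> iter (n * k) p x = x.
Proof. move=> H; elim: n => // n IH; by rewrite mulSn iterD IH H. Qed.

Lemma anc_antisym (x y : V) : anc x y -> anc y x -> x = y.
Proof.
move=> [a Ha] [b Hb].
have Hx : iter (b + a) p x = x by rewrite iterD Ha.
case: (posnP (b + a)) => h.
  by move: Ha; have -> : a = 0 by lia.
have : x = z0.
  have := iter_mul_fix #|V| Hx; rewrite -(subnK (leq_pmulr #|V| h)) iterD iter_card iter_zero.
  by move=> <-.
move=> xz; move: Ha; rewrite xz iter_zero => <-. done.
Qed.

Lemma anc_total (x a b : V) : anc x a -> anc x b -> anc a b \/ anc b a.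
Proof.
move=> [i <-] [j <-]; case: (leqP i j) => h.
  by left; exists (j - i); rewrite -iterD subnK.
by right; exists (i - j); rewrite -iterD subnK // ltnW.
Qed.

Lemma anc_step (y w : V) : anc y w -> y != w -> exists c, [/\ p c = w, c != z0 & anc y c].
Proof.
move=> Hyw ne.
have ex : exists k, iter k p y == w by case: Hyw => k Hk; exists k; apply/eqP.
case: (ex_minnP ex) => k /eqP Hk Hmin.
case: k Hk Hmin => [|k] Hk Hmin; first by move: Hk ne => /= ->; rewrite eqxx.
exists (iter k p y); split => //; last by exists k.
apply/eqP => Hz; move: Hk => /=; rewrite Hz par_zero => Hw.
have := Hmin k; rewrite Hz Hw eqxx => /(_ isT); lia.
Qed.

Lemma in_children (v c : V) : (c \in children v) = (p c == v) && (c != z0).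
Proof. by rewrite inE. Qed.

Lemma leaf_anc (x y : V) : is_leaf x -> anc y x -> y = x.
Proof.
move=> /andP [_ /eqP Hc] Hyx; apply/eqP; apply/negPn/negP => ne.
case: (anc_step Hyx ne) => c [Hp Hc0 _].
have : c \in children x by rewrite inE Hp eqxx.
by rewrite Hc inE.
Qed.

Definition lca_spec (x y w : V) :=
  [/\ anc x w, anc y w & forall u, anc x u -> anc y u -> anc w u].

Lemma lca_exists (x y : V) : exists w, lca_spec x y w.
Proof.
have ex : exists i, ancb y (iter i p x).
  by exists #|V|; rewrite iter_card; apply/ancbP; apply: anc_zero.
case: (ex_minnP ex) => i /ancbP Hi Hmin.
exists (iter i p x); split => //; first by exists i.
move=> u [j Hj] Hyu.
case: (leqP i j) => h; first by exists (j - i); rewrite -iterD subnK.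
have : i <= j by apply: Hmin; apply/ancbP; rewrite Hj.
lia.
Qed.

Lemma lca_eq (x y w : V) : lca_spec x y w -> lca x y = w.
Proof.
move=> [H1 H2 H3]; rewrite /lca; case: pickP => [w' /and3P [/ancbP A1 /ancbP A2 /forallP A3]|Hn] /=.
  apply: anc_antisym; last by apply: H3.
  by have := A3 w; rewrite (introT (ancbP _ _) H1) (introT (ancbP _ _) H2) /= => /ancbP.
exfalso; have := Hn w; rewrite (introT (ancbP _ _) H1) (introT (ancbP _ _) H2) /=.
suff -> : [forall w0, ancb x w0 && ancb y w0 ==> ancb w w0] by [].
apply/forallP => u; apply/implyP => /andP [/ancbP a /ancbP b]; apply/ancbP; exact: H3.
Qed.

Lemma lca_specP (x y : V) : lca_spec x y (lca x y).
Proof. by case: (lca_exists x y) => w Hw; rewrite (lca_eq Hw). Qed.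

End TreeLemmas.

Lemma anc_strict (T : ptree) (x y : vtx T) : anc x y -> x != y -> anc (par x) y.
Proof.
move=> [[|k] Hk] ne; first by move: Hk ne => /= ->; rewrite eqxx.
by exists k; rewrite -iterSr.
Qed.

Lemma sibling (T : ptree) (HT : planted T) (w1 w2 : vtx T) :
  par w1 = par w2 -> w2 != zero T -> anc w1 w2 -> w1 = w2.
Proof.
move=> Hp n2 H; apply/eqP; apply/negPn/negP => ne.
have h1 := anc_strict H ne; rewrite Hp in h1.
have e := anc_antisym HT h1 (anc_par _).
by rewrite (par_fix HT e) eqxx in n2.
Qed.

Section Remove.
Variables (T : ptree) (HT : planted T) (x0 : vtx T) (Hx0 : is_leaf x0)
  (y1 : vtx T) (Hy1 : is_leaf y1) (ne01 : y1 != x0).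
Notation V := (vtx T).
Notation z0 := (zero T).
Definition pp := par x0.
Definition keep (v : V) := (v != x0) && ((v != pp) || (2 < #|children pp|)).

Lemma x0_nz : x0 != z0. Proof. by case/andP: Hx0. Qed.

Lemma x0_child : x0 \in children pp. Proof. by rewrite inE eqxx x0_nz. Qed.

Lemma no_child_x0 (v : V) : v != z0 -> par v != x0.
Proof.
move=> nz; apply/negP => /eqP e.
have : v \in children x0 by rewrite inE e eqxx nz.
by case/andP: Hx0 => _ /eqP ->; rewrite inE.
Qed.

Lemma par_not_x0 (v : V) : par v != x0.
Proof.
case: (eqVneq v z0) => [->|nz]; last exact: no_child_x0.
by rewrite par_zero // eq_sym x0_nz.
Qed.

Lemma children_zero_uniq (a b : V) : a \in children z0 -> b \in children z0 -> a = b.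
Proof.
move=> ha hb; apply/eqP; apply/negPn/negP => ne.
case: HT => _ [_ [H1 _]].
have : 1 < #|children z0| by apply/card_gt1P; exists a, b.
by rewrite H1.
Qed.

Lemma pp_nz : pp != z0.
Proof.
apply/negP => /eqP e.
have nz1 : y1 != z0 by case/andP: Hy1.
case: (anc_step HT (anc_zero HT y1) nz1) => c [Hc cz Hyc].
have cx : c = x0.
  apply: children_zero_uniq; first by rewrite inE Hc eqxx cz.
  by rewrite -e x0_child.
rewrite cx in Hyc; move: ne01; by rewrite (leaf_anc HT Hx0 Hyc) eqxx.
Qed.

Lemma pp_par_neq : par pp != pp.
Proof. apply/negP => /eqP e; have := pp_nz; by rewrite (par_fix HT e) eqxx. Qed.

Lemma keep_zero : keep z0.
Proof. by rewrite /keep eq_sym x0_nz eq_sym pp_nz. Qed.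

Lemma keep_ppp : keep (par pp).
Proof. by rewrite /keep par_not_x0 pp_par_neq. Qed.

Lemma not_keep (v : V) : ~~ keep v -> v = x0 \/ (v = pp /\ #|children pp| <= 2).
Proof.
rewrite /keep negb_and negbK negb_or negbK -leqNgt.
case/orP => [/eqP->|/andP [/eqP -> h]]; by [left|right].
Qed.

Lemma not_keep_par (v : V) : ~~ keep (par v) -> par v = pp /\ #|children pp| <= 2.
Proof. case/not_keep => // e; have := par_not_x0 v; by rewrite e eqxx. Qed.

Definition pf (v : V) : V := if keep (par v) then par v else par pp.

Lemma keep_pf v : keep (pf v).
Proof. rewrite /pf; case: ifP => // _; exact: keep_ppp. Qed.

Definition V' := {v : V | keep v}.
Definition par' (v : V') : V' := exist _ (pf (val v)) (keep_pf (val v)).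
Definition zero' : V' := exist _ z0 keep_zero.
Definition T' := PTree par' zero'.

Lemma anc_pf (v : V) : anc v (pf v).
Proof.
rewrite /pf; case: ifP => hk; first exact: anc_par.
case: (not_keep_par (negbT hk)) => e _.
by exists 2; rewrite /= e.
Qed.

Lemma anc'_val (u w : V') : anc (T:=T') u w -> anc (val u) (val w).
Proof.
move=> [k <-]; elim: k => /= [|k IH]; first exact: anc_refl.
exact: anc_trans IH (anc_pf _).
Qed.

Lemma val_anc' (u w : V') : anc (val u) (val w) -> anc (T:=T') u w.
Proof.
move=> [k Hk].
suff H : forall n k (u : V'), k <= n -> iter k (@par T) (val u) = val w -> anc (T:=T') u w.
  exact: H (leqnn k) Hk.
elim=> [|n IH] [|k'] u' hk hit.
- by rewrite (val_inj hit); exact: anc_refl.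
- done.
- by rewrite (val_inj hit); exact: anc_refl.
- rewrite iterSr in hit.
  case: (boolP (keep (par (val u')))) => hkp.
    have hv : val (par' u') = par (val u') by rewrite /= /pf hkp.
    apply: anc_trans (anc_par (T:=T') u') _.
    by apply: (IH k') => //; rewrite hv.
  case: (not_keep_par hkp) => e _.
  rewrite e in hit.
  case: k' hk hit => [|k''] hk hit.
    by move: (valP w); rewrite -hit /=; rewrite e in hkp; rewrite (negbTE hkp).
  rewrite iterSr in hit.
  have hv : val (par' u') = par pp by rewrite /= /pf (negbTE hkp).
  apply: anc_trans (anc_par (T:=T') u') _.
  by apply: (IH k'') => //; [lia | rewrite hv].
Qed.

Lemma in_children' (v w : V') :
  (w \in children (T:=T') v) = (pf (val w) == val v) && (val w != z0).
Proof. by rewrite inE. Qed.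

Lemma other_uniq (a b : V) : ~~ keep pp -> a \in children pp -> b \in children pp ->
  a != x0 -> b != x0 -> a = b.
Proof.
move=> hk ha hb na nb; apply/eqP; apply/negPn/negP => nab.
case: (not_keep hk) => [e|[_ h]].
  by move: (pp_nz); rewrite /pp in e *; move: (par_not_x0 x0); rewrite e eqxx.
have : 2 < #|children pp|.
  by apply/card_gt2P; exists a, b, x0; split; [split|split] => //; rewrite ?x0_child // eq_sym.
lia.
Qed.

Lemma pp_ch_nz (c : V) : c \in children pp -> c != pp.
Proof.
rewrite inE => /andP [/eqP e _]; apply/negP => /eqP e'.
by move: pp_par_neq; rewrite -{1}e' e eqxx.
Qed.

Lemma lift (v : V') (w : V) : par w = val v -> w != z0 -> w != x0 ->
  exists w' : V', [/\ pf (val w') = val v, val w' != z0 & anc (val w') w].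
Proof.
move=> hp hz hx.
case: (boolP (keep w)) => hk.
  exists (exist _ w hk); split => //=; last exact: anc_refl.
  by rewrite /pf hp (valP v).
case: (not_keep hk) => [e|[e hle]]; first by rewrite e eqxx in hx.
have h1 : 1 < #|children pp|.
  case: HT => _ [_ [_ H]]; apply: H; first exact: pp_nz.
  by rewrite /is_leaf negb_and; apply/orP; right; apply/set0Pn; exists x0; exact: x0_child.
case/card_gt1P: h1 => a [b [ha hb nab]].
have [c [hc nc]] : exists c, c \in children pp /\ c != x0.
  case: (eqVneq a x0) => [ea|na]; last by exists a.
  by exists b; split => //; rewrite -ea eq_sym.
have kc : keep c by rewrite /keep nc pp_ch_nz.
have hpc : par c = pp by move: hc; rewrite inE => /andP [/eqP].
exists (exist _ c kc); split => /=.
- by rewrite /pf hpc -e (negbTE hk) hp.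
- by move: hc; rewrite inE => /andP [].
- by rewrite e -hpc; exact: anc_par.
Qed.

Lemma two_children (u : V) : keep u -> 1 < #|children u| ->
  exists a b, [/\ a \in children u, b \in children u, a != b, a != x0 & b != x0].
Proof.
move=> hk h1.
case: (eqVneq u pp) => [e|ne].
  subst u; move: hk; rewrite /keep eqxx /= => /andP [_ h2].
  case/card_gt2P: h2 => a [b [c [[ha hb hc] [nab nbc nca]]]].
  case: (eqVneq a x0) => [ea|na].
    by subst a; exists b, c; split => //; rewrite eq_sym.
  case: (eqVneq b x0) => [eb|nb].
    by subst b; exists a, c; split => //; rewrite eq_sym.
  by exists a, b.
case/card_gt1P: h1 => a [b [ha hb nab]].
have nx : forall w, w \in children u -> w != x0.
  move=> w; rewrite inE => /andP [/eqP hw _]; apply/negP => /eqP ew.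
  by move: ne; rewrite -hw ew /pp eqxx.
by exists a, b; split => //; apply: nx.
Qed.

Lemma leaf'E (v : V') : is_leaf (T:=T') v = is_leaf (val v).
Proof.
rewrite /is_leaf /=.
have -> : (v != zero') = (val v != z0) by [].
case: (eqVneq (val v) z0) => //= nz.
apply/idP/idP.
- move=> /eqP h0; apply/negPn/negP => hne.
  have h1 : 1 < #|children (val v)|.
    by case: HT => _ [_ [_ H]]; apply: H => //; rewrite /is_leaf nz.
  case: (two_children (valP v) h1) => a [b [ha _ _ na _]].
  move: ha; rewrite inE => /andP [/eqP hpa hza].
  case: (lift hpa hza na) => w' [h1' h2' _].
  have : w' \in children (T:=T') v by rewrite in_children' h1' eqxx h2'.
  by rewrite h0 inE.
- move=> /eqP h0; apply/eqP/setP => w'; rewrite in_children' inE.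
  apply/negP => /andP [/eqP hp hz].
  move: hp; rewrite /pf; case: ifP => hk hp.
    have : val w' \in children (val v) by rewrite inE hp eqxx hz.
    by rewrite h0 inE.
  have : pp \in children (val v) by rewrite inE hp eqxx pp_nz.
  by rewrite h0 inE.
Qed.

Lemma planted' : planted T'.
Proof.
split; first by apply: val_inj; rewrite /= /pf par_zero // keep_zero.
split; first by move=> v; apply: val_anc'; exact: anc_zero.
split.
  case: HT => _ [_ [H1 _]].
  case/cards1P: (introT eqP H1) => r hr.
  have hrc : r \in children z0 by rewrite hr set11.
  move: (hrc); rewrite inE => /andP [/eqP hpr hzr].
  have nrx : r != x0.
    apply/negP => /eqP e; move: pp_nz; by rewrite /pp -e hpr eqxx.
  case: (@lift zero' r hpr hzr nrx) => r' [h1 h2 _].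
  apply/eqP/cards1P; exists r'; apply/setP => w'; rewrite inE.
  apply/idP/eqP => [hw|->]; last by rewrite in_children' h1 eqxx h2.
  have key : forall a' : V', a' \in children (T:=T') zero' ->
     (val a' = r /\ keep r) \/ (~~ keep pp /\ pp = r /\ val a' \in children pp /\ val a' != x0).
    move=> a'; rewrite in_children' => /andP [/eqP hp hz].
    move: hp; rewrite /pf; case: ifP => hk hp.
      have ea : val a' = r.
        by apply: children_zero_uniq; rewrite ?hrc // inE hp eqxx hz.
      by left; split => //; rewrite -ea; exact: (valP a').
    right; case: (not_keep_par (negbT hk)) => e _.
    have epr : pp = r by apply: children_zero_uniq; rewrite ?hrc // inE hp eqxx pp_nz.
    split; first by rewrite -e hk.
    split => //; split; first by rewrite inE e eqxx hz.
    by move: (valP a'); rewrite /keep => /andP [].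
  have hr' : r' \in children (T:=T') zero' by rewrite in_children' h1 eqxx h2.
  apply: val_inj.
  case: (key _ hw) => [[e1 k1]|[nk [epr [c1 n1]]]];
  case: (key _ hr') => [[e2 k2]|[nk' [epr' [c2 n2]]]].
  - by rewrite e1 e2.
  - by move: nk'; rewrite epr' k1.
  - by move: nk; rewrite epr k2.
  - exact: other_uniq.
move=> v nz nl.
rewrite leaf'E in nl.
have nz' : val v != z0 by [].
have h1 : 1 < #|children (val v)|.
  by case: HT => _ [_ [_ H]]; apply: H.
case: (two_children (valP v) h1) => a [b [ha hb nab na nb]].
move: ha hb; rewrite !inE => /andP [/eqP hpa hza] /andP [/eqP hpb hzb].
case: (lift hpa hza na) => a' [a1 a2 a3].
case: (lift hpb hzb nb) => b' [b1 b2 b3].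
apply/card_gt1P; exists a', b'; split; rewrite ?in_children' ?a1 ?b1 ?eqxx ?a2 ?b2 //.
apply/negP => /eqP e; subst b'.
case: (anc_total a3 b3) => h.
  by move: nab; rewrite (sibling HT _ hzb h) ?eqxx // hpa hpb.
by move: nab; rewrite (sibling HT _ hza h) ?eqxx // hpa hpb.
Qed.


Lemma lca_keep (x y : V) : is_leaf x -> is_leaf y -> x != x0 -> y != x0 -> keep (lca x y).
Proof.
move=> lx ly nx ny.
case: (lca_specP HT x y) => ax ay amin.
rewrite /keep; apply/andP; split.
  apply/negP => /eqP e; rewrite e in ax.
  by move: nx; rewrite (leaf_anc HT Hx0 ax) eqxx.
case: (boolP (keep pp)) => [/andP [_ h]|nk]; first by rewrite eqxx /= in h; rewrite h orbT.
have hpx : pp != x0 := par_not_x0 x0.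
move: (nk); rewrite /keep hpx eqxx /= => /negbTE ->; rewrite orbF.
apply/negP => /eqP e.
have ppnl : ~~ is_leaf pp.
  by rewrite /is_leaf negb_and; apply/orP; right; apply/set0Pn; exists x0; exact: x0_child.
have get : forall t, is_leaf t -> t != x0 -> anc t pp ->
    exists a, [/\ a \in children pp, a != x0 & anc t a].
  move=> t lt nt at_.
  have ntp : t != pp by apply/negP => /eqP et; move: ppnl; rewrite -et lt.
  case: (anc_step HT at_ ntp) => a [hpa hza hta].
  exists a; split => //; first by rewrite inE hpa eqxx hza.
  by apply/negP => /eqP ea; move: nt; rewrite ea in hta; rewrite (leaf_anc HT Hx0 hta) eqxx.
rewrite e in ax ay.
case: (get x lx nx ax) => a [ha na xa].
case: (get y ly ny ay) => b [hb nb yb].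
have eab := other_uniq nk ha hb na nb; subst b.
have h1 := amin a xa yb; rewrite e in h1.
have hpa : par a = pp by move: ha; rewrite inE => /andP [/eqP].
have h2 : anc a pp by rewrite -hpa; exact: anc_par.
by move: (pp_ch_nz ha); rewrite (anc_antisym HT h1 h2) eqxx.
Qed.

Lemma lca'E (x y : V') : is_leaf (val x) -> is_leaf (val y) ->
  val (lca (T:=T') x y) = lca (val x) (val y).
Proof.
move=> lx ly.
have nx : val x != x0 by move: (valP x) => /andP [].
have ny : val y != x0 by move: (valP y) => /andP [].
pose z' : V' := exist _ (lca (val x) (val y)) (lca_keep lx ly nx ny).
suff -> : lca (T:=T') x y = z' by [].
apply: (lca_eq planted').
case: (lca_specP HT (val x) (val y)) => ax ay amin.
split; [exact: val_anc' | exact: val_anc' |].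
move=> u hxu hyu; apply: val_anc'; apply: amin; exact: anc'_val.
Qed.

End Remove.

Definition pscen (L M : finType) (sigma : L -> M) (S : ptree) (lfS : M -> vtx S)
  (tauS : vtx S -> R) (T : ptree) (lfT : L -> vtx T) (A : {set L})
  (mu : vtx T -> (vtx S + vtx S)%type) (tauT : vtx T -> R) : Prop :=
  planted T /\ time_map tauT /\ {in A &, injective lfT} /\
  (forall v, is_leaf v <-> exists2 l, l \in A & lfT l = v) /\
  (forall x v, mu x = inr v -> v != zero S) /\
  (forall x, mu x = inl (zero S) <-> x = zero T) /\
  (forall x, (exists v, mu x = inl v /\ is_leaf v) <-> is_leaf x) /\
  (forall l, l \in A -> mu (lfT l) = inl (lfS (sigma l))) /\
  (forall x v, mu x = inl v -> tauT x = tauS v) /\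
  (forall x v, mu x = inr v -> Rlt (tauS v) (tauT x) /\ Rlt (tauT x) (tauS (par v))).

Lemma pscen_step (L M : finType) (sigma : L -> M) (S : ptree) (lfS : M -> vtx S)
  (tauS : vtx S -> R) (T : ptree) (lfT : L -> vtx T) (A : {set L})
  (mu : vtx T -> (vtx S + vtx S)%type) (tauT : vtx T -> R) (l0 : L) :
  pscen sigma lfS tauS lfT A mu tauT -> l0 \in A -> 1 < #|A| ->
  exists (T' : ptree) (lfT' : L -> vtx T') mu' tauT',
    pscen sigma lfS tauS lfT' (A :\ l0) mu' tauT' /\
    forall l l', l \in A :\ l0 -> l' \in A :\ l0 ->
      tauT' (lca (lfT' l) (lfT' l')) = tauT (lca (lfT l) (lfT l')).
Proof.
move=> [HT [Htau [Hinj [Hleaf [Hmu1 [HS0 [HS1 [Hlf [HS2 HS3]]]]]]]]] Hl0 HA.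
have Hx0 : is_leaf (lfT l0) by apply/Hleaf; exists l0.
have [l1 [Hl1 n10]] : exists l1, l1 \in A /\ l1 != l0.
  case/card_gt1P: HA => a [b [ha hb nab]].
  case: (eqVneq a l0) => [e|n]; last by exists a.
  by exists b; split => //; rewrite -e eq_sym.
have Hy1 : is_leaf (lfT l1) by apply/Hleaf; exists l1.
have ne01 : lfT l1 != lfT l0.
  by apply/negP => /eqP e; move: n10; rewrite (Hinj _ _ Hl1 Hl0 e) eqxx.
pose T2 := T' HT Hx0 Hy1 ne01.
pose z2 : vtx T2 := zero' HT Hx0 Hy1 ne01.
have keepA : forall l, l \in A :\ l0 -> keep (lfT l0) (lfT l).
  move=> l; rewrite !inE => /andP [nl hl].
  have lf : is_leaf (lfT l) by apply/Hleaf; exists l.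
  rewrite /keep; apply/andP; split.
    by apply/negP => /eqP e; move: nl; rewrite (Hinj _ _ hl Hl0 e) eqxx.
  apply/orP; left; apply/negP => /eqP e.
  move: lf; rewrite e /is_leaf => /andP [_ /eqP h].
  by move: (x0_child Hx0); rewrite /pp h inE.
pose lfT2 (l : L) : vtx T2 := insubd z2 (lfT l).
have lfT2E : forall l, l \in A :\ l0 -> val (lfT2 l) = lfT l.
  by move=> l hl; rewrite /lfT2 insubdK //; exact: keepA.
exists T2, lfT2, (fun v => mu (val v)), (fun v => tauT (val v)).
have HT2 : planted T2 by exact: planted'.
split; last first.
  move=> l l' hl hl'.
  have leafA : forall l, l \in A :\ l0 -> is_leaf (val (lfT2 l)).
    move=> k hk; rewrite lfT2E //; apply/Hleaf; exists k => //.
    by move: hk; rewrite !inE => /andP [].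
  by rewrite /T2 lca'E ?leafA // !lfT2E.
split; first exact: HT2.
split.
  move=> x y /(ancbP HT2) hxy nxy; apply: Htau.
    by apply/(ancbP HT); exact: (anc'_val hxy).
  by rewrite val_eqE.
split.
  move=> l l' hl hl' e; apply: (Hinj l l').
  - by move: hl; rewrite !inE => /andP [].
  - by move: hl'; rewrite !inE => /andP [].
  by rewrite -lfT2E // -[lfT l']lfT2E // e.
split.
  move=> v; rewrite leaf'E; split.
    move=> /Hleaf [l hl e]; exists l.
      rewrite !inE hl andbT; apply/negP => /eqP el; subst l.
      by move: (valP v); rewrite -e /keep eqxx.
    by apply: val_inj; rewrite lfT2E // !inE hl andbT; apply/negP => /eqP el; subst l;
      move: (valP v); rewrite -e /keep eqxx.
  move=> [l hl <-]; rewrite lfT2E //; apply/Hleaf; exists l => //.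
  by move: hl; rewrite !inE => /andP [].
split; first by move=> x v; exact: Hmu1.
split.
  move=> x; rewrite HS0; split => [e|->] //; exact: val_inj.
split; first by move=> x; rewrite leaf'E; exact: HS1.
split.
  move=> l hl; rewrite lfT2E //; apply: Hlf; by move: hl; rewrite !inE => /andP [].
split; first by move=> x v; exact: HS2.
by move=> x v; exact: HS3.
Qed.

Lemma pscen_restrict (L M : finType) (sigma : L -> M) (S : ptree) (lfS : M -> vtx S)
  (tauS : vtx S -> R) n : forall (T : ptree) (lfT : L -> vtx T) (A : {set L})
  (mu : vtx T -> (vtx S + vtx S)%type) (tauT : vtx T -> R) (B : {set L}),
  pscen sigma lfS tauS lfT A mu tauT -> B \subset A -> B != set0 -> #|A| = n + #|B| ->
  exists (T' : ptree) (lfT' : L -> vtx T') mu' tauT',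
    pscen sigma lfS tauS lfT' B mu' tauT' /\
    forall l l', l \in B -> l' \in B ->
      tauT' (lca (lfT' l) (lfT' l')) = tauT (lca (lfT l) (lfT l')).
Proof.
elim: n => [|n IH] T lfT A mu tauT B HP sBA nB hc.
  have eAB : B = A by apply/eqP; rewrite eqEcard sBA hc add0n leqnn.
  by subst B; exists T, lfT, mu, tauT; split.
have [l0 hl0 nl0] : exists2 l0, l0 \in A & l0 \notin B.
  apply/subsetPn; apply/negP => sAB.
  by have := subset_leq_card sAB; rewrite hc; lia.
have hB : 0 < #|B| by rewrite card_gt0.
have hA : 1 < #|A| by lia.
case: (pscen_step HP hl0 hA) => T2 [lfT2 [mu2 [tau2 [HP2 Hl2]]]].
have sB2 : B \subset A :\ l0.
  apply/subsetP => x hx; rewrite !inE (subsetP sBA _ hx) andbT.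
  by apply/negP => /eqP e; subst x; rewrite hx in nl0.
have hc2 : #|A :\ l0| = n + #|B| by move: hc; rewrite (cardsD1 l0 A) hl0; lia.
case: (IH _ _ _ _ _ _ HP2 sB2 nB hc2) => T3 [lfT3 [mu3 [tau3 [HP3 Hl3]]]].
exists T3, lfT3, mu3, tau3; split => // l l' hl hl'.
by rewrite Hl3 // Hl2 // (subsetP sB2).
Qed.

Lemma iff_tr (P Q Q' X : Prop) : (Q <-> Q') -> (P <-> Q /\ X) -> (P <-> Q' /\ X).
Proof. tauto. Qed.

Theorem corollary6 (L M : finType) (Glt Geq Ggt : rel L) (sigma : L -> M) :
  is_g3partition Glt Geq Ggt ->
  [set: L] != set0 ->
  explainable Glt Geq Ggt sigma <->
  (forall L' : {set L}, L' != set0 ->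
     explainable (restr L' Glt) (restr L' Geq) (restr L' Ggt) (restr_col L' sigma)).
Proof.
move=> _ hne; split.
- move=> [T [S [lfT [lfS [mu [tauT [tauS [HS Hex]]]]]]]] L' nL'.
  move: HS => [HT [HS [Htau [HtauS [Hinj [Hleaf [HinjS [HlfS [Hmu1 [HS0 [HS1 [Hlf [HS2 HS3]]]]]]]]]]]]].
  have HP : pscen sigma lfS tauS lfT [set: L] mu tauT.
    split => //; split => //; split; first by move=> x y _ _; exact: Hinj.
    split; first by move=> v; rewrite Hleaf; split => [[l e]|[l _ e]]; exists l.
    by do 5 (split => //).
  have hc : #|[set: L]| = (#|[set: L]| - #|L'|) + #|L'|.
    by rewrite subnK // subset_leq_card // subsetT.
  case: (pscen_restrict HP (subsetT L') nL' hc) => T' [lfT' [mu' [tau' [HP' Hl]]]].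
  move: HP' => [HT' [Htau' [Hinj' [Hleaf' [Hmu1' [HS0' [HS1' [Hlf' [HS2' HS3']]]]]]]]].
  exists T', S, (fun x : {x | x \in L'} => lfT' (val x)), lfS, mu', tau', tauS.
  split.
    split => //; split => //; split => //; split => //.
    split; first by move=> x y e; apply: val_inj; apply: Hinj' => //; exact: valP.
    split.
      move=> v; rewrite Hleaf'; split => [[l hl e]|[x e]].
        by exists (exist _ l hl).
      by exists (val x) => //; exact: valP.
    split => //; split => //; split => //; split => //; split => //.
    split; first by move=> x; rewrite Hlf' //; exact: valP.
    by split.
  move=> x y /=.
  rewrite Hl ?(valP x) ?(valP y) //.
  have ev : (x <> y) <-> (val x <> val y).
    by split => [h e|h e]; apply: h; [apply: val_inj | rewrite e].
  case: (Hex (val x) (val y)) => /= H1 [H2 H3].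
  rewrite /restr /restr_col; split; [|split].
  + by rewrite H1 ev.
  + by rewrite H2 ev.
  + by rewrite H3 ev.
- move=> H.
  case: (H _ hne) => T [S [lfT [lfS [mu [tauT [tauS [HS Hex]]]]]]].
  move: HS => [HT [HS [Htau [HtauS [Hinj [Hleaf [HinjS [HlfS [Hmu1 [HS0 [HS1 [Hlf [HS2 HS3]]]]]]]]]]]]].
  pose k (l : L) : {x | x \in [set: L]} := exist _ l (in_setT l).
  have kval : forall x, k (val x) = x by move=> x; apply: val_inj.
  exists T, S, (fun l => lfT (k l)), lfS, mu, tauT, tauS.
  split.
    split => //; split => //; split => //; split => //.
    split; first by move=> x y /Hinj e; move: (congr1 val e).
    split.
      move=> v; rewrite Hleaf; split => [[x e]|[l e]].
        by exists (val x); rewrite kval.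
      by exists (k l).
    split => //; split => //; split => //; split => //; split => //.
  move=> l l' /=.
  have ev : (k l <> k l') <-> (l <> l').
    by split => [h e|h e]; apply: h; [rewrite e | exact: (congr1 val e)].
  case: (Hex (k l) (k l')) => /= H1 [H2 H3].
  split; [|split].
  + exact: iff_tr ev H1.
  + exact: iff_tr ev H2.
  + exact: iff_tr ev H3.
Qed.
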